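(* Assume $(a,b,c)\neq(0,0,0)$. (i) If $\sigma<\mu<a_1$, then $|e_{2\sigma}|<|e_{2\mu}|$. (ii) If $\sigma,\mu>0$, $\sigma,\mu\notin\{a_1,a_2,a_3\}$, $(\mu/\sigma)^2>a_3/a_1$ and $H(e_{2\sigma})=H(e_{2\mu})$, then $|e_{2\sigma}|>|e_{2\mu}|$. (iii) If $0<\sigma<a_1<a_3<\mu$ and $H(e_{2\sigma})=H(e_{2\mu})$, then $|e_{2\sigma}|>|e_{2\mu}|$.
   Context: Fix constants $0<a_1<a_2<a_3$ and $a,b,c\in\mathbb R$. For $\lambda\in\mathbb R\setminus\{a_1,a_2,a_3\}$ let $$e_{2\lambda}=\Big(\frac{a}{\lambda-a_1},\frac{b}{\lambda-a_2},\frac{c}{\lambda-a_3}\Big).$$ Let $$H(\mathbf x)=\tfrac12(a_1(x^1)^2+a_2(x^2)^2+a_3(x^3)^2)+ax^1+bx^2+cx^3,$$ and let $|\cdot|$ be the Euclidean norm on $\mathbb R^3$. *)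

(* Defs.v *)
From Stdlib Require Import Reals.
Open Scope R_scope.

Definition e2 (a1 a2 a3 a b c lam : R) : R * R * R :=
  (a / (lam - a1), b / (lam - a2), c / (lam - a3)).

Definition Hfun (a1 a2 a3 a b c : R) (x : R * R * R) : R :=
  let '(x1, x2, x3) := x in
  / 2 * (a1 * x1 ^ 2 + a2 * x2 ^ 2 + a3 * x3 ^ 2) + a * x1 + b * x2 + c * x3.

Definition norm3 (x : R * R * R) : R :=
  let '(x1, x2, x3) := x in sqrt (x1 ^ 2 + x2 ^ 2 + x3 ^ 2).

(* Main.v *)
Require Import Defs.
From Stdlib Require Import Reals Lra Psatz.
Open Scope R_scope.

Lemma pow2_gt_0 (x : R) : x <> 0 -> 0 < x ^ 2.
Proof. intros H. simpl. rewrite Rmult_1_r. destruct (Rlt_or_le 0 x); [nra|].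
  assert (x < 0) by (destruct H0; auto; congruence). nra. Qed.

Lemma sq_le (k l m a : R) : l < m -> m < a -> (k/(l-a))^2 <= (k/(m-a))^2.
Proof.
  intros H1 H2.
  replace ((k/(l-a))^2) with (k^2 * /((a-l)^2)) by (field; lra).
  replace ((k/(m-a))^2) with (k^2 * /((a-m)^2)) by (field; lra).
  apply Rmult_le_compat_l; [apply pow2_ge_0|].
  assert (0 < (a-m)^2) by (apply pow2_gt_0; lra).
  assert (0 < (a-l)^2) by (apply pow2_gt_0; lra).
  apply Rlt_le, Rinv_lt_contravar; [apply Rmult_lt_0_compat; lra| nra].
Qed.

Lemma sq_lt (k l m a : R) : k <> 0 -> l < m -> m < a -> (k/(l-a))^2 < (k/(m-a))^2.
Proof.
  intros Hk H1 H2.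
  replace ((k/(l-a))^2) with (k^2 * /((a-l)^2)) by (field; lra).
  replace ((k/(m-a))^2) with (k^2 * /((a-m)^2)) by (field; lra).
  apply Rmult_lt_compat_l; [apply pow2_gt_0; auto|].
  assert (0 < (a-m)^2) by (apply pow2_gt_0; lra).
  assert (0 < (a-l)^2) by (apply pow2_gt_0; lra).
  apply Rinv_lt_contravar; [apply Rmult_lt_0_compat; lra| nra].
Qed.

Lemma lowb (a1 a x : R) : 0 < a1 -> a1 <= a -> a1 * (x^2/a) <= x^2.
Proof.
  intros H1 H2.
  replace (a1 * (x^2/a)) with (x^2 * (a1/a)) by (field; lra).
  assert (a1 / a <= 1).
  { apply (Rmult_le_reg_r a); [lra|]. unfold Rdiv. rewrite Rmult_assoc, Rinv_l; lra. }
  pose proof (pow2_ge_0 x). nra.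
Qed.

Lemma upb (a3 a x : R) : 0 < a -> a <= a3 -> x^2 <= a3 * (x^2/a).
Proof.
  intros H1 H2.
  replace (a3 * (x^2/a)) with (x^2 * (a3/a)) by (field; lra).
  assert (1 <= a3 / a).
  { apply (Rmult_le_reg_r a); [lra|]. unfold Rdiv. rewrite Rmult_assoc, Rinv_l; lra. }
  pose proof (pow2_ge_0 x). nra.
Qed.

Lemma core (a1 a2 a3 s m x1 x2 x3 y1 y2 y3 : R) :
  0<a1 -> a1<a2 -> a2<a3 -> 0<s -> 0<m -> a1*m^2 > a3*s^2 ->
  s^2*(x1^2/a1+x2^2/a2+x3^2/a3) = m^2*(y1^2/a1+y2^2/a2+y3^2/a3) ->
  ~(y1=0/\y2=0/\y3=0) -> y1^2+y2^2+y3^2 < x1^2+x2^2+x3^2.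
Proof.
  intros h1 h2 h3 hs hm hr hC hy.
  set (Mx := x1^2/a1+x2^2/a2+x3^2/a3) in *.
  set (My := y1^2/a1+y2^2/a2+y3^2/a3) in *.
  assert (HNx : a1 * Mx <= x1^2+x2^2+x3^2).
  { unfold Mx. pose proof (lowb a1 a1 x1 h1 (Rle_refl _)).
    pose proof (lowb a1 a2 x2 h1 ltac:(lra)). pose proof (lowb a1 a3 x3 h1 ltac:(lra)). lra. }
  assert (HNy : y1^2+y2^2+y3^2 <= a3 * My).
  { unfold My. pose proof (upb a3 a1 y1 h1 ltac:(lra)).
    pose proof (upb a3 a2 y2 ltac:(lra) ltac:(lra)). pose proof (upb a3 a3 y3 ltac:(lra) (Rle_refl _)). lra. }
  assert (HMy : 0 < My).
  { unfold My.
    assert (forall y a, 0 < a -> 0 <= y^2/a) as G.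
    { intros y a ha. unfold Rdiv; apply Rmult_le_pos; [apply pow2_ge_0|apply Rlt_le, Rinv_0_lt_compat; lra]. }
    pose proof (G y1 a1 ltac:(lra)). pose proof (G y2 a2 ltac:(lra)). pose proof (G y3 a3 ltac:(lra)).
    destruct (Req_dec y1 0) as [e1|n1]; [destruct (Req_dec y2 0) as [e2|n2];
      [destruct (Req_dec y3 0) as [e3|n3]|]|].
    - exfalso; tauto.
    - assert (0 < y3^2/a3) by (unfold Rdiv; apply Rmult_lt_0_compat; [apply pow2_gt_0; auto| apply Rinv_0_lt_compat; lra]). lra.
    - assert (0 < y2^2/a2) by (unfold Rdiv; apply Rmult_lt_0_compat; [apply pow2_gt_0; auto| apply Rinv_0_lt_compat; lra]). lra.
    - assert (0 < y1^2/a1) by (unfold Rdiv; apply Rmult_lt_0_compat; [apply pow2_gt_0; auto| apply Rinv_0_lt_compat; lra]). lra. }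
  set (C := m^2 * My) in *.
  assert (HC : 0 < C) by (unfold C; nra).
  assert (0 < s^2) by nra. assert (0 < m^2) by nra.
  set (Nx := x1^2+x2^2+x3^2) in *. set (Ny := y1^2+y2^2+y3^2) in *.
  assert (E1 : a1 * C <= Nx * s^2) by nra.
  assert (E2 : Ny * m^2 <= a3 * C) by (unfold C; nra).
  assert (E3 : a3 * C * s^2 < a1 * C * m^2) by nra.
  assert (Hf : Ny * (m^2 * s^2) < Nx * (m^2 * s^2)) by nra.
  apply Rmult_lt_reg_r in Hf; [exact Hf|nra].
Qed.

Lemma Hid (a1 a2 a3 a b c l : R) : 0 < a1 -> a1 < a2 -> a2 < a3 ->
  l <> a1 -> l <> a2 -> l <> a3 ->
  2 * Hfun a1 a2 a3 a b c (e2 a1 a2 a3 a b c l) + (a^2/a1+b^2/a2+c^2/a3) =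
  l^2 * ((a/(l-a1))^2/a1 + (b/(l-a2))^2/a2 + (c/(l-a3))^2/a3).
Proof.
  intros. unfold Hfun, e2.
  assert (l - a1 <> 0) by lra. assert (l - a2 <> 0) by lra. assert (l - a3 <> 0) by lra.
  field. repeat split; lra.
Qed.

Lemma divnz (k d : R) : d <> 0 -> k / d = 0 -> k = 0.
Proof.
  intros Hd H. replace k with (k/d * d) by (field; auto). rewrite H; ring.
Qed.

Theorem lemma6p1 (a1 a2 a3 a b c : R) :
  0 < a1 -> a1 < a2 -> a2 < a3 ->
  ~ (a = 0 /\ b = 0 /\ c = 0) ->
  (forall sigma mu : R, sigma < mu -> mu < a1 ->
     norm3 (e2 a1 a2 a3 a b c sigma) < norm3 (e2 a1 a2 a3 a b c mu)) /\
  (forall sigma mu : R, 0 < sigma -> 0 < mu ->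
     sigma <> a1 -> sigma <> a2 -> sigma <> a3 ->
     mu <> a1 -> mu <> a2 -> mu <> a3 ->
     (mu / sigma) ^ 2 > a3 / a1 ->
     Hfun a1 a2 a3 a b c (e2 a1 a2 a3 a b c sigma) =
       Hfun a1 a2 a3 a b c (e2 a1 a2 a3 a b c mu) ->
     norm3 (e2 a1 a2 a3 a b c sigma) > norm3 (e2 a1 a2 a3 a b c mu)) /\
  (forall sigma mu : R, 0 < sigma -> sigma < a1 -> a3 < mu ->
     Hfun a1 a2 a3 a b c (e2 a1 a2 a3 a b c sigma) =
       Hfun a1 a2 a3 a b c (e2 a1 a2 a3 a b c mu) ->
     norm3 (e2 a1 a2 a3 a b c sigma) > norm3 (e2 a1 a2 a3 a b c mu)).
Proof.
  intros h1 h2 h3 hk.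
  assert (P2 : forall sigma mu : R, 0 < sigma -> 0 < mu ->
     sigma <> a1 -> sigma <> a2 -> sigma <> a3 ->
     mu <> a1 -> mu <> a2 -> mu <> a3 ->
     (mu / sigma) ^ 2 > a3 / a1 ->
     Hfun a1 a2 a3 a b c (e2 a1 a2 a3 a b c sigma) =
       Hfun a1 a2 a3 a b c (e2 a1 a2 a3 a b c mu) ->
     norm3 (e2 a1 a2 a3 a b c sigma) > norm3 (e2 a1 a2 a3 a b c mu)).
  { intros s m hs hm s1 s2 s3 m1 m2 m3 hr hH.
    pose proof (Hid a1 a2 a3 a b c s h1 h2 h3 s1 s2 s3) as Es.
    pose proof (Hid a1 a2 a3 a b c m h1 h2 h3 m1 m2 m3) as Em.
    rewrite hH in Es. rewrite Es in Em.
    assert (hr' : a1 * m^2 > a3 * s^2).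
    { replace ((m/s)^2) with (m^2/s^2) in hr by (field; lra).
      assert (0 < s^2) by nra.
      apply Rmult_gt_compat_r with (r := a1 * s^2) in hr; [|nra].
      replace (m^2/s^2 * (a1*s^2)) with (a1*m^2) in hr by (field; lra).
      replace (a3/a1 * (a1*s^2)) with (a3*s^2) in hr by (field; lra). lra. }
    unfold norm3, e2. apply sqrt_lt_1_alt. split.
    { pose proof (pow2_ge_0 (a/(m-a1))). pose proof (pow2_ge_0 (b/(m-a2))).
      pose proof (pow2_ge_0 (c/(m-a3))). lra. }
    apply (core a1 a2 a3 s m); auto.
    intros [e1 [e2' e3]]. apply hk. repeat split.
    - apply (divnz a (m-a1)); auto; lra.
    - apply (divnz b (m-a2)); auto; lra.
    - apply (divnz c (m-a3)); auto; lra. }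
  split; [|split; auto].
  - intros s m hsm hm. unfold norm3, e2. apply sqrt_lt_1_alt. split.
    { pose proof (pow2_ge_0 (a/(s-a1))). pose proof (pow2_ge_0 (b/(s-a2))).
      pose proof (pow2_ge_0 (c/(s-a3))). lra. }
    pose proof (sq_le a s m a1 hsm hm).
    pose proof (sq_le b s m a2 hsm ltac:(lra)).
    pose proof (sq_le c s m a3 hsm ltac:(lra)).
    destruct (Req_dec a 0) as [ea|na]; [destruct (Req_dec b 0) as [eb|nb];
      [destruct (Req_dec c 0) as [ec|nc]|]|].
    + exfalso; tauto.
    + pose proof (sq_lt c s m a3 nc hsm ltac:(lra)). lra.
    + pose proof (sq_lt b s m a2 nb hsm ltac:(lra)). lra.
    + pose proof (sq_lt a s m a1 na hsm hm). lra.
  - intros s m hs hsa hm hH. apply P2; try lra.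
    assert (a3/a1 < m/s).
    { apply Rlt_trans with (m/a1).
      - unfold Rdiv. apply Rmult_lt_compat_r; [apply Rinv_0_lt_compat|]; lra.
      - unfold Rdiv. apply Rmult_lt_compat_l; [lra|]. apply Rinv_lt_contravar; nra. }
    assert (1 < a3/a1).
    { apply (Rmult_lt_reg_r a1); [lra|]. unfold Rdiv. rewrite Rmult_assoc, Rinv_l; lra. }
    simpl. nra.
Qed.
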